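(* Let $G$ be a finite group and $\rho:G\to\mathrm{GL}_d(\mathbb{C})$ a mixable irreducible representation. Then $\rho$ is potentially mixable, i.e. there is $a\in G$ such that $-1$ is an eigenvalue of $\rho(a)$. Furthermore, if $(g_1,p_1),\dots,(g_k,p_k)$ is a mixing sequence of $\rho$ of minimal length, then $p_1=p_k=\tfrac12$ and $g_1$ and $g_k$ have even order in $G$; moreover $g_1$ and $g_k$ can be replaced by elements of order a power of $2$ (keeping a mixing sequence of the same length with $p_1=p_k=\tfrac12$).
   Context: An irreducible representation $\rho:G\to\mathrm{GL}_d(\mathbb{C})$ of a finite group $G$ is mixable if there exist $g_1,\dots,g_k\in G$ and $p_1,\dots,p_k\in[0,1]$ with $\prod_{i=1}^k\big((1-p_i)I+p_i\rho(g_i)\big)=0$ (product taken in the order $i=1,\dots,k$); $(g_1,p_1),\dots,(g_k,p_k)$ is then called a mixing sequence of $\rho$, of length $k$. *)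

(* Defs.v *)
From HB Require Import structures.
From mathcomp Require Import all_boot all_order all_algebra all_fingroup all_solvable all_field all_character.
Set Implicit Arguments. Unset Strict Implicit. Unset Printing Implicit Defensive.
Import GroupScope Order.TTheory GRing.Theory Num.Theory.
Local Open Scope ring_scope.

Section Mixing.
Variables (gT : finGroupType) (G : {group gT}) (n : nat).
Variable rG : mx_representation algC G n.

Definition mix_factor (x : gT * algC) : 'M[algC]_n :=
  (1 - x.2)%:M + x.2 *: rG x.1.

Definition mix_prod (s : seq (gT * algC)) : 'M[algC]_n :=
  foldr (fun x M => mix_factor x *m M) 1%:M s.

Definition mixing_seq (s : seq (gT * algC)) : Prop :=
  all (fun x => (x.1 \in G) && (0 <= x.2 <= 1)) s /\ mix_prod s = 0.

Definition mixable : Prop := exists s, mixing_seq s.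

Definition potentially_mixable : Prop :=
  exists2 a, a \in G & eigenvalue (rG a) (-1).

Definition min_mixing_seq (s : seq (gT * algC)) : Prop :=
  mixing_seq s /\ forall s', mixing_seq s' -> (size s <= size s')%N.

End Mixing.

Definition mdflt (gT : finGroupType) : gT * algC := (1%g, 0).

(* Main.v *)
Require Import Defs.
From HB Require Import structures.
From mathcomp Require Import all_boot all_order all_algebra all_fingroup all_solvable all_field all_character.
From mathcomp Require Import ring.
From Stdlib Require Import Classical.
Import GroupScope Order.TTheory GRing.Theory Num.Theory.
Local Open Scope ring_scope.

Section Aux.
Variables (gT : finGroupType) (G : {group gT}) (n : nat).
Variable rG : mx_representation algC G n.

Lemma mix_prod_rcons s x : mix_prod rG (rcons s x) = mix_prod rG s *m mix_factor rG x.
Proof.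
elim: s => [|y s IH] /=; first by rewrite mul1mx mulmx1.
by rewrite IH mulmxA.
Qed.

Lemma core x : x.1 \in G -> 0 < x.2 -> x.2 < 1 -> mix_factor rG x \notin unitmx ->
  [/\ x.2 = 1/2, ~~ odd #[x.1]%g & eigenvalue (rG x.1) (-1)].
Proof.
case: x => g p /= Gg p0 p1 nu.
have : \det (mix_factor rG (g,p)) == 0 by rewrite unitmxE unitfE negbK in nu.
case/det0P => v nz vM.
have pnz : p != 0 by rewrite gt_eqF.
set c := (1 - p) / p.
have vA : v *m rG g = (- c) *: v.
  rewrite /mix_factor /= mulmxDr mul_mx_scalar -scalemxAr in vM.
  apply: (scalerI pnz); rewrite scalerA mulrN /c mulrCA mulfV // mulr1 scaleNr.
  by apply/eqP; rewrite -addr_eq0 addrC vM.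
have vAm : forall m, v *m rG (g ^+ m)%g = (-c)^+m *: v.
  elim=> [|m IH]; first by rewrite expg0 repr_mx1 mulmx1 expr0 scale1r.
  by rewrite expgS repr_mxM ?groupX // mulmxA vA -scalemxAl IH scalerA exprS.
have cm : (-c)^+#[g]%g = 1.
  have := vAm #[g]%g; rewrite expg_order repr_mx1 mulmx1 => /eqP.
  rewrite -subr_eq0 -{1}(scale1r v) -scalerBl scaler_eq0 (negPf nz) orbF subr_eq0.
  by move/eqP <-.
have c0 : 0 < c by rewrite /c divr_gt0 // subr_gt0.
have c1 : c = 1.
  have := congr1 Num.norm cm; rewrite normrX normrN normr1 ger0_norm ?ltW //.
  by move/eqP; rewrite pexpr_eq1 ?order_gt0 ?ltW // => /eqP.
have e1 : 1 - p = p by rewrite -{1}(mulfVK pnz (1-p)) -/c c1 mul1r.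
split.
- have -> : p = (p + p) / 2 by field.
  by rewrite -{1}e1 subrK.
- move: cm; rewrite c1 -signr_odd; case: (odd _) => //=; rewrite expr1 => /eqP.
  by rewrite eq_sym -addr_eq0 -mulr2n pnatr_eq0.
- by apply/eigenvalueP; exists v => //; rewrite vA c1.
Qed.


Lemma end_lemma x t : (x.1 \in G) && (0 <= x.2 <= 1) ->
  (mix_factor rG x \in unitmx -> mixing_seq rG t) ->
  (forall s', mixing_seq rG s' -> ((size t).+1 <= size s')%N) ->
  [/\ x.2 = 1/2, ~~ odd #[x.1]%g & eigenvalue (rG x.1) (-1)].
Proof.
case: x => g p /andP[Gg /andP[p0 p1]] Hu Hmin.
have nu : mix_factor rG (g,p) \notin unitmx.
  by apply/negP => /Hu /Hmin; rewrite ltnn.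
apply: core => //=.
- rewrite lt_def p0 andbT; apply/negP => /eqP p00; move: nu.
  by rewrite /mix_factor /= p00 subr0 scale0r addr0 unitmx1.
- rewrite lt_def p1 andbT; apply/negP => /eqP p00; move: nu.
  by rewrite /mix_factor /= -p00 subrr scale1r (_ : 0%:M = 0) ?add0r ?repr_mx_unit //; apply/matrixP => i j; rewrite !mxE mul0rn.
Qed.

End Aux.

Section Aux2.
Variables (gT : finGroupType) (G : {group gT}) (n : nat).
Variable rG : mx_representation algC G n.+1.

Lemma replace x : x.1 \in G -> x.2 = 1/2 -> ~~ odd #[x.1]%g ->
  exists S : 'M[algC]_n.+1,
    mix_factor rG (x.1.`_2, 1/2) = S *m mix_factor rG x /\
    mix_factor rG (x.1.`_2, 1/2) = mix_factor rG x *m S.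
Proof.
case: x => g p /= Gg -> ev.
set b := chinese (#[g]`_2)%N (#[g]`_(2^'))%N 1 0.
have gb : (g.`_2 = g ^+ b)%g by rewrite /constt.
have ob : odd b.
  have d2 : (2 %| (#[g]`_2)%N)%N.
    rewrite p_part; apply: dvdn_exp => //.
    by rewrite logn_gt0 mem_primes order_gt0 /= dvdn2 ev.
  have := chinese_modl (coprime_partC 2%N #[g]%g #[g]%g) 1 0.
  move=> /(congr1 (modn^~ 2%N)) /=; rewrite -/b !modn_dvdm // !modn2.
  by case: (odd b).
have Ab : rG (g ^+ b)%g = rG g ^+ b := repr_mxX rG b Gg.
set A := rG g in Ab *.
set S := \sum_(i < b) (-A)^+i.
exists S.
have key : 1 + A ^+ b = (1 + A) * S.
  have := subrX1 (-A) b; rewrite exprNn -signr_odd ob expr1 mulN1r => h.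
  by rewrite -[LHS]opprK opprD addrC h -mulNr opprB opprK.
have comm : GRing.comm (1 + A) S.
  apply: commr_sum => i _; apply: commrX; apply: commrN.
  by apply: commr_sym; apply: commrD; [apply: commr1 | apply: commr_refl].
have h2 : 1 - 1/2 = 1/2 :> algC by rewrite {1}(splitr 1) addrK.
have E : forall B : 'M[algC]_n.+1, (1/2)%:M + (1/2) *: B = (1/2) *: (1 + B).
  by move=> B; rewrite scalerDr -idmxE scalemx1.
rewrite /mix_factor /= h2 -[rG g.`_2]/(rG (g ^+ b)%g) Ab -/A !E key.
rewrite -scalemxAr -scalemxAl !mulmxE; split; last by [].
by rewrite comm.
Qed.

End Aux2.

Theorem mainTheorem13 (gT : finGroupType) (G : {group gT}) (n : nat)
    (rG : mx_representation algC G n) :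
  mx_irreducible rG -> mixable rG ->
  potentially_mixable rG /\
  forall s : seq (gT * algC), min_mixing_seq rG s ->
    let k := size s in
    [/\ (nth (mdflt gT) s 0).2 = 1 / 2, (nth (mdflt gT) s k.-1).2 = 1 / 2,
        ~~ odd #[(nth (mdflt gT) s 0).1]%g,
        ~~ odd #[(nth (mdflt gT) s k.-1).1]%g &
        exists s' : seq (gT * algC),
          [/\ mixing_seq rG s', size s' = k &
              (forall i, (0 < i < k.-1)%N -> nth (mdflt gT) s' i = nth (mdflt gT) s i)] /\
          [/\ (nth (mdflt gT) s' 0).2 = 1 / 2, (nth (mdflt gT) s' k.-1).2 = 1 / 2,
              2.-elt (nth (mdflt gT) s' 0).1 & 2.-elt (nth (mdflt gT) s' k.-1).1]].
Proof.
move=> irr mixr.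
case: n rG irr mixr => [|n] rG irr mixr.
  exfalso; case: irr => _ /negP nz _; apply: nz; apply/eqP/matrixP => [[i Hi]].
  by [].
have nz1 : (1%:M : 'M[algC]_n.+1) != 0 by case: irr.
have exmin : exists s, min_mixing_seq rG s.
  case: mixr => s0 hs0.
  suff H : forall N s, (size s <= N)%N -> mixing_seq rG s ->
      exists s, min_mixing_seq rG s by exact: (H _ s0 (leqnn _) hs0).
  elim=> [|N IH] s hs ms.
    exists s; split => // s' _; move: hs; rewrite leqn0 => /eqP -> //.
  case: (classic (exists s', mixing_seq rG s' /\ (size s' < size s)%N)).
    case=> s' [ms' lt]; apply: (IH s') => //.
    by rewrite -ltnS (leq_trans lt hs).
  move=> nex; exists s; split => // s' ms'; rewrite leqNgt; apply/negP => lt.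
  by apply: nex; exists s'.
have firstp : forall x t, min_mixing_seq rG (x :: t) ->
    [/\ x.2 = 1/2, ~~ odd #[x.1]%g & eigenvalue (rG x.1) (-1)].
  move=> x t [[/= /andP[Hx Ht] Hp] Hmin]; apply: (@end_lemma _ _ _ rG x t Hx) => [Hu|]; last exact: Hmin.
  split => //.
  by rewrite -(mulKmx Hu (mix_prod rG t)) Hp mulmx0.
have lastp : forall t y, min_mixing_seq rG (rcons t y) ->
    [/\ y.2 = 1/2, ~~ odd #[y.1]%g & eigenvalue (rG y.1) (-1)].
  move=> t y [[/= Hall Hp] Hmin]; move: Hall; rewrite all_rcons => /andP[Hy Ht].
  apply: (@end_lemma _ _ _ rG y t Hy) => [Hu|]; last by move=> s' /Hmin; rewrite size_rcons.
  split => //.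
  by rewrite -(mulmxK Hu (mix_prod rG t)) -mix_prod_rcons Hp mul0mx.
split.
  case: exmin => [[|x t] smin].
    by case: smin => [[_ /= E]] _; move: nz1; rewrite E eqxx.
  have [_ _ ev] := firstp _ _ smin.
  by case: smin => [[/= /andP[/andP[Gx _] _] _] _]; exists x.1.
move=> [|x t] smin.
  by case: smin => [[_ /= E]] _; move: nz1; rewrite E eqxx.
have [hx1 hx2 _] := firstp _ _ smin.
have Gx : x.1 \in G by case: smin => [[/= /andP[/andP[Gx _] _] _] _].
have [S1 [E1 E1']] := @replace _ _ _ rG _ Gx hx1 hx2.
have Gc : forall z : gT, z \in G -> z.`_2 \in G.
  move=> z Gz; have sG : <[z]>%g \subset G by rewrite cycle_subG.
  exact: (subsetP sG _ (cycle_constt _ _)).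
have h01 : (0 <= (1/2 : algC)) && ((1/2 : algC) <= 1).
  apply/andP; split; first by rewrite divr_ge0 ?ler01 ?ler0n.
  by rewrite ler_pdivrMr ?ltr0n // mul1r ler1n.
have nthlast : forall (z w : gT * algC) u,
    nth (mdflt gT) (z :: rcons u w) (size (z :: rcons u w)).-1 = w.
  by move=> z w u; rewrite /= size_rcons [LHS]/= nth_rcons ltnn eqxx.
case/lastP: t smin => [|u y] smin.
  have Hp : mix_factor rG x *m 1%:M = 0 by case: smin => [[]].
  split => //; exists [:: (x.1.`_2, 1/2)]; split; split => //.
  - by rewrite /mixing_seq /= Gc // h01; split => //; rewrite E1 -mulmxA Hp mulmx0.
  - by move=> i; rewrite ltn0 andbF.
  - exact: p_elt_constt.
  - exact: p_elt_constt.
have [hy1 hy2 _] := lastp (x :: u) y smin.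
have [[Hall Hp] _] := smin.
move: Hall; rewrite /= all_rcons => /andP[/andP[_ _] /andP[/andP[Gy _] Hu]].
have [S2 [E2 E2']] := @replace _ _ _ rG _ Gy hy1 hy2.
rewrite !nthlast /=.
split => //; exists ((x.1.`_2, 1/2) :: rcons u (y.1.`_2, 1/2)); split; split.
- rewrite /mixing_seq /= all_rcons /= !Gc // h01 Hu /=; split => //.
  rewrite mix_prod_rcons E1 E2'.
  move: Hp; rewrite /= mix_prod_rcons => Hp.
  by rewrite -!mulmxA (mulmxA (mix_prod rG u)) (mulmxA (mix_factor rG x)) Hp mul0mx mulmx0.
- by rewrite /= !size_rcons.
- by move=> [|i] //=; rewrite size_rcons ltnS => hi; rewrite !nth_rcons hi.
- by [].
- by rewrite size_rcons [nth _ _ _]/= nth_rcons ltnn eqxx.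
- exact: p_elt_constt.
- by rewrite size_rcons [nth _ _ _]/= nth_rcons ltnn eqxx; exact: p_elt_constt.
Qed.
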